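(* Let $m\ge1$ and, for $\mathfrak{g}\in\{\mathfrak{h},\mathfrak{r},\mathfrak{d}\}$, let $\mathcal{G}(q)=\max\{\mathfrak{g}(\tau):\tau\in T,\ \rho(\tau)\le q\}$. Then for $q\in\{\frac12,1,\frac32,2,\dots\}$: $\mathcal{G}(q)=2q$ for $\mathfrak{g}=\mathfrak{h}$ (simple iterations); $\mathcal{G}(q)=\lfloor q+\frac12\rfloor$ for $\mathfrak{g}=\mathfrak{r}$ (modified Newton iterations); $\mathcal{G}(q)=\lfloor\log_2(q+\frac12)\rfloor+1$ for $\mathfrak{g}=\mathfrak{d}$ (full Newton iterations). Moreover $\mathcal{G}(q)=\max\{\mathfrak{g}'(u):u\in U_f,\ \rho(u)\le q\}$.
   Context: $T$ is the set of $(m+1)$-colored rooted trees: the empty tree $\emptyset$ and all $\tau=[\tau_1,\dots,\tau_\kappa]_l$ with $l\in\{0,\dots,m\}$, $\kappa\ge0$, $\tau_1,\dots,\tau_\kappa\in T\setminus\{\emptyset\}$ (unordered), formed by joining the roots of the $\tau_j$ by edges to a new root of color $l$ ($\bullet_l$ when $\kappa=0$). Order: $\rho(\emptyset)=0$, $\rho([\tau_1,\dots,\tau_\kappa]_l)=\sum_j\rho(\tau_j)+1$ if $l=0$, and $=\sum_j\rho(\tau_j)+\frac12$ if $l\ge1$. $U_f$ is the set of trees $u=[\tau_1,\dots,\tau_\kappa]_f$, $\kappa\ge0$, $\tau_j\in T\setminus\{\emptyset\}$, with $\rho(u)=\sum_j\rho(\tau_j)$ and $\mathfrak{g}'(u)=\max_j\mathfrak{g}(\tau_j)$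 ($0$ if $\kappa=0$). Maxima over empty sets are $0$. $\mathfrak{h}(\emptyset)=0$, $\mathfrak{h}(\bullet_l)=1$, $\mathfrak{h}([\tau_1,\dots,\tau_\kappa]_l)=1+\max_j\mathfrak{h}(\tau_j)$; $\mathfrak{r}(\emptyset)=0$, $\mathfrak{r}(\bullet_l)=1$, $\mathfrak{r}([\tau_1]_l)=\mathfrak{r}(\tau_1)$, $\mathfrak{r}([\tau_1,\dots,\tau_\kappa]_l)=1+\max_j\mathfrak{r}(\tau_j)$ for $\kappa\ge2$; $\mathfrak{d}(\emptyset)=0$, $\mathfrak{d}(\bullet_l)=1$, $\mathfrak{d}([\tau_1,\dots,\tau_\kappa]_l)=M$ if exactly one $i$ has $\mathfrak{d}(\tau_i)=M:=\max_j\mathfrak{d}(\tau_j)$, and $M+1$ if at least two indices attain $M$. *)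

(* Defs.v *)
From mathcomp Require Import all_boot.
Set Implicit Arguments. Unset Strict Implicit. Unset Printing Implicit Defensive.

(* Non-empty (m+1)-colored rooted trees [tau_1,...,tau_k]_l, l : 'I_m.+1.
   Children are stored as a list; all quantities below are invariant under
   permutation of children, so this represents unordered trees faithfully
   for the purposes of the statement. The empty tree is [None : option (tree m)]. *)
Inductive tree (m : nat) : Type := Node of 'I_m.+1 & seq (tree m).

Section Funs.
Variable m : nat.

(* twice the order: rho2 t = 2 * rho t *)
Fixpoint rho2 (t : tree m) : nat :=
  match t with
  | Node l cs => sumn (map rho2 cs) + (if nat_of_ord l == 0 then 2 else 1)
  end.

Fixpoint hgt (t : tree m) : nat :=
  match t with Node _ cs => (\max_(c <- map hgt cs) c).+1 end.

Fixpoint rgt (t : tree m) : nat :=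
  match t with
  | Node _ [::] => 1
  | Node _ [:: c] => rgt c
  | Node _ cs => (\max_(c <- map rgt cs) c).+1
  end.

Fixpoint dgt (t : tree m) : nat :=
  match t with
  | Node _ [::] => 1
  | Node _ cs =>
      let ds := map dgt cs in
      let M := \max_(c <- ds) c in
      if 2 <= count (pred1 M) ds then M.+1 else M
  end.

Definition ext (f : tree m -> nat) (t : option (tree m)) : nat :=
  if t is Some t' then f t' else 0.

(* U_f : u = [tau_1,...,tau_k]_f, represented by its list of children;
   rho(u) = sum rho(tau_j), g'(u) = max g(tau_j) (0 if k = 0). *)
Definition rho2U (u : seq (tree m)) : nat := sumn (map rho2 u).
Definition primeU (f : tree m -> nat) (u : seq (tree m)) : nat :=
  \max_(c <- map f u) c.
End Funs.

Definition is_max_on (A : Type) (P : A -> Prop) (f : A -> nat) (v : nat) : Prop :=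
  (exists2 x, P x & f x = v) /\ (forall x, P x -> f x <= v).

(* For q = k/2 (k >= 1): G(q) = v and G(q) = max{g'(u) : u in U_f, rho(u) <= q} *)
Definition G_spec (m : nat) (g : tree m -> nat) (k v : nat) : Prop :=
  is_max_on (fun t : option (tree m) => ext (@rho2 m) t <= k) (ext g) v /\
  is_max_on (fun u : seq (tree m) => rho2U u <= k) (primeU g) v.

(* Main.v *)
Require Import Defs.
From mathcomp Require Import all_boot.
From mathcomp Require Import zify.

Section S.
Variable m : nat.
Implicit Types (t : tree m) (cs : seq (tree m)).

Fixpoint allP (P : tree m -> Prop) cs : Prop :=
  match cs with [::] => True | c :: cs' => P c /\ allP P cs' end.

Definition tree_ind2 (P : tree m -> Prop)
  (H : forall l cs, allP P cs -> P (Node l cs)) : forall t, P t :=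
  fix F t := match t with
    Node l cs => H l cs ((fix G cs := match cs return allP P cs with
                  | [::] => I | c :: cs' => conj (F c) (G cs') end) cs) end.

Lemma rho2_gt0 t : 0 < rho2 t.
Proof. case: t => l cs /=; case: (_ == 0); lia. Qed.

Lemma hgt_bound t : hgt t <= rho2 t.
Proof.
elim/tree_ind2: t => l cs IH /=.
have : \max_(c <- map (@hgt m) cs) c <= sumn (map (@rho2 m) cs).
  elim: cs IH => [|c cs IHc] /=; first by rewrite big_nil.
  case=> h1 h2; rewrite big_cons geq_max; apply/andP; split.
    by apply: leq_trans h1 (leq_addr _ _).
  by apply: leq_trans (IHc h2) (leq_addl _ _).
case: (_ == 0); lia.
Qed.

Lemma max2_bound cs : allP (fun c => (rgt c).*2 <= (rho2 c).+1) cs ->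
  (\max_(c <- map (@rgt m) cs) c).*2 <= (sumn (map (@rho2 m) cs)).+1.
Proof.
elim: cs => [|c cs IHc] /=; first by rewrite big_nil.
case=> h1 h2; rewrite big_cons.
have := IHc h2; have := rho2_gt0 c; lia.
Qed.

Lemma rgt_bound t : (rgt t).*2 <= (rho2 t).+1.
Proof.
elim/tree_ind2: t => l cs IH.
case: cs IH => [|c1 [|c2 cs]] /=.
- move=> _; case: (_ == 0); lia.
- case=> h1 _; rewrite addn0; case: (_ == 0); lia.
- case=> h1 [h2 h3]; rewrite !big_cons.
  have := max2_bound _ h3; have := rho2_gt0 c1; have := rho2_gt0 c2.
  case: (_ == 0); lia.
Qed.

Lemma count_bound n cs : allP (fun c => 2 ^ dgt c <= (rho2 c).+1) cs ->
  count (pred1 n) (map (@dgt m) cs) * (2 ^ n).-1 <= sumn (map (@rho2 m) cs).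
Proof.
elim: cs => [|c cs IHc] //= [h1 h2].
rewrite mulnDl; apply: leq_add; last exact: IHc.
case: eqP => [<-|_] /=; lia.
Qed.

Lemma maxexp_bound cs : allP (fun c => 2 ^ dgt c <= (rho2 c).+1) cs ->
  2 ^ (\max_(c <- map (@dgt m) cs) c) <= (sumn (map (@rho2 m) cs)).+1.
Proof.
elim: cs => [|c cs IHc] /=; first by rewrite big_nil.
case=> h1 h2; rewrite big_cons; have := IHc h2.
case: (leqP (dgt c) (\max_(c <- map (@dgt m) cs) c)) => h.
  lia.
lia.
Qed.

Lemma dgt_bound t : 2 ^ dgt t <= (rho2 t).+1.
Proof.
elim/tree_ind2: t => l cs IH.
case: cs IH => [|c1 cs] /=.
- move=> _; case: (_ == 0); lia.
- move=> IH.
  set M := \max_(c <- _) c.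
  have hm := maxexp_bound (c1 :: cs) IH.
  have hc := count_bound M (c1 :: cs) IH.
  rewrite /= -/M in hm hc.
  case: ifP => hcnt.
    have h2 : 2 * (2 ^ M).-1 <= rho2 c1 + sumn (map (@rho2 m) cs).
      apply: leq_trans hc; apply: leq_mul => //.
    have : 0 < 2 ^ M by rewrite expn_gt0.
    rewrite expnS.
    case: (_ == 0); lia.
  case: (_ == 0); rewrite -/M; lia.
Qed.

Lemma dgt_bound' t : dgt t <= trunc_log 2 (rho2 t).+1.
Proof. exact: trunc_log_max (dgt_bound t). Qed.

Lemma list_bound (g : tree m -> nat) (F : nat -> nat) :
  (forall a b, a <= b -> F a <= F b) -> (forall t, g t <= F (rho2 t)) ->
  forall u, primeU g u <= F (rho2U u).
Proof.
move=> Fm hg; elim => [|c u IH]; rewrite /primeU /rho2U /=; first by rewrite big_nil.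
rewrite big_cons geq_max; apply/andP; split.
  by apply: leq_trans (hg c) (Fm _ _ (leq_addr _ _)).
by apply: leq_trans IH (Fm _ _ (leq_addl _ _)).
Qed.

Lemma G_spec_gen (g : tree m -> nat) (F : nat -> nat) k v :
  (forall a b, a <= b -> F a <= F b) -> (forall t, g t <= F (rho2 t)) ->
  F k = v -> (exists t, rho2 t <= k /\ g t = v) -> G_spec g k v.
Proof.
move=> Fm hg Fk [t [ht gt]]; split; (split; [idtac|]).
- by exists (Some t).
- case=> [x|] //= hx; rewrite -Fk; exact: leq_trans (hg x) (Fm _ _ hx).
- exists [:: t]; first by rewrite /rho2U /= addn0.
  by rewrite /primeU big_cons big_nil maxn0.
- move=> x hx; rewrite -Fk; exact: leq_trans (list_bound _ _ Fm hg x) (Fm _ _ hx).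
Qed.

Definition leaf : tree m := Node ord_max [::].
Fixpoint ht j := match j with 0 => leaf | j.+1 => Node ord_max [:: ht j] end.
Fixpoint rt j := match j with 0 => leaf | j.+1 => Node ord_max [:: rt j; leaf] end.
Fixpoint dt j := match j with 0 => leaf | j.+1 => Node ord_max [:: dt j; dt j] end.

Hypothesis hm : 1 <= m.
Lemma ordmax : (nat_of_ord (@ord_max m) == 0) = false.
Proof. by rewrite /=; case: m hm. Qed.

Lemma ht_spec j : rho2 (ht j) = j.+1 /\ hgt (ht j) = j.+1.
Proof.
elim: j => [|j [h1 h2]] /=; rewrite ordmax ?big_nil //.
by rewrite h1 big_cons big_nil h2 maxn0 addn0 addn1.
Qed.

Lemma rt_spec j : rho2 (rt j) = j.*2.+1 /\ rgt (rt j) = j.+1.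
Proof.
elim: j => [|j [h1 h2]] /=; rewrite ordmax ?big_nil //.
rewrite h1 !big_cons big_nil h2 /= (_ : maxn 1 0 = 1) // (maxn_idPl _) //.
split => //; lia.
Qed.

Lemma dt_spec j : (rho2 (dt j)).+1 = 2 ^ j.+1 /\ dgt (dt j) = j.+1.
Proof.
elim: j => [|j [h1 h2]] /=; rewrite ordmax ?big_nil //.
rewrite !big_cons big_nil h2 maxn0 maxnn /= eqxx /=; split => //.
rewrite expnS; lia.
Qed.
End S.

Theorem mainTheorem7 (m : nat) (hm : 1 <= m) (k : nat) (hk : 1 <= k) :
  G_spec (@hgt m) k k /\
  G_spec (@rgt m) k (k.+1 %/ 2) /\
  G_spec (@dgt m) k (trunc_log 2 k.+1).
Proof.
split; [|split].
- apply: (@G_spec_gen m _ id) => //; first exact: hgt_bound.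
  exists (ht m k.-1); have [h1 h2] := ht_spec m hm k.-1; rewrite h1 h2; lia.
- apply: (@G_spec_gen m _ (fun x => x.+1 %/ 2)) => //.
  + move=> a b hab; apply: leq_div2r; lia.
  + move=> t; have := rgt_bound m t; lia.
  + exists (rt m (k.+1 %/ 2).-1); have [h1 h2] := rt_spec m hm (k.+1 %/ 2).-1.
    rewrite h1 h2; lia.
- apply: (@G_spec_gen m _ (fun x => trunc_log 2 x.+1)) => //.
  + move=> a b hab; apply: leq_trunc_log; lia.
  + exact: dgt_bound'.
  + set d := trunc_log 2 k.+1.
    have dpos : 0 < d by rewrite /d trunc_log_gt0.
    have hd : 2 ^ d <= k.+1 by apply: trunc_logP.
    exists (dt m d.-1); have [h1 h2] := dt_spec m hm d.-1.
    rewrite h2 prednK //; split => //.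
    move: h1; rewrite prednK // => h1; lia.
Qed.
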